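(* Let $f$ be a Moufang permutation on an abelian group $(X,+)$ with associated biadditive mapping $\beta$. Then $(f^3,\beta)$ is a construction pair on $(X,+)$.
   Context: A permutation $f$ of an abelian group $(X,+)$ is a Moufang permutation if the map $\beta(x,y)=f^{-1}(f(x)+f(y))-x-y$ (P1) is symmetric, alternating ($\beta(x,x)=0$) and biadditive, and for all $x,y,z\in X$: (P2) $\beta(\beta(x,y),z)=0$ and (P3) $\beta(f(x),f(y))=f(\beta(f^3(x),y))$; $\beta$ is the associated biadditive mapping. A construction pair on $(X,+)$ is a pair $(g,\gamma)$ where $g$ is a permutation of $X$ and $\gamma:X\times X\to X$ is symmetric, alternating and biadditive, such that for all $x,y,z\in X$: (C1) $g^{-1}(g(x)+g(y))=x+y+\gamma(x,y)+g^{-1}(\gamma(x,y))+g^{-2}(\gamma(x,y))$; (C2) $\gamma(\gamma(x,y),z)=0$; (C3) $g^{-1}(\gamma(x,y))=\gamma(g(x),y)$. *)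

(* Defs.v *)
From mathcomp Require Import all_boot all_algebra.
Set Implicit Arguments. Unset Strict Implicit. Unset Printing Implicit Defensive.
Import GRing.Theory.
Local Open Scope ring_scope.

Definition is_perm_with_inv (X : Type) (p pinv : X -> X) :=
  cancel p pinv /\ cancel pinv p.

Definition sym_alt_biadd (X : zmodType) (b : X -> X -> X) :=
  [/\ forall x y, b x y = b y x,
      forall x, b x x = 0 &
      forall x y z, b (x + y) z = b x z + b y z /\ b x (y + z) = b x y + b x z].

Definition assoc_beta (X : zmodType) (f finv : X -> X) : X -> X -> X :=
  fun x y => finv (f x + f y) - x - y.

Definition moufang_perm (X : zmodType) (f finv : X -> X) :=
  let beta := assoc_beta f finv in
  [/\ is_perm_with_inv f finv,
      sym_alt_biadd beta,                                        (* P1 *)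
      forall x y z, beta (beta x y) z = 0 &                      (* P2 *)
      forall x y, beta (f x) (f y) = f (beta (f (f (f x))) y)].  (* P3 *)

Definition construction_pair (X : zmodType) (g ginv : X -> X) (gamma : X -> X -> X) :=
  [/\ is_perm_with_inv g ginv,
      sym_alt_biadd gamma,
      forall x y, ginv (g x + g y)
                  = x + y + gamma x y + ginv (gamma x y) + ginv (ginv (gamma x y)), (* C1 *)
      forall x y z, gamma (gamma x y) z = 0 &                                     (* C2 *)
      forall x y, ginv (gamma x y) = gamma (g x) y].                              (* C3 *)

(* Main.v *)
Require Import Defs.
From mathcomp Require Import all_boot all_algebra.
Local Open Scope ring_scope.
Import GRing.Theory.

Theorem mainTheorem14 (X : zmodType) (f finv : X -> X) :
  moufang_perm f finv ->
  construction_pair (fun x => f (f (f x))) (fun x => finv (finv (finv x)))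
                    (assoc_beta f finv).
Proof.
move=> [[fK Kf] [Bs Ba Bd] P2 P3].
set B := assoc_beta f finv in Bs Ba Bd P2 P3 *.
have defB : forall x y, finv (f x + f y) = x + y + B x y.
  move=> x y; rewrite /B /assoc_beta.
  by rewrite -[_ - x - y]addrA -opprD addrC addNKr.
have B0 : forall x u v, B x (B u v) = 0 by move=> x u v; rewrite Bs P2.
have QB : forall u v, finv (B u v) = B (f (f u)) (finv v).
  move=> u v; rewrite -{1}(Kf u) -{1}(Kf v) P3 fK.
  by rewrite Kf.
have Qadd : forall p u v, finv (p + B u v) = finv p + finv (B u v).
  move=> p u v; rewrite -{1}(Kf p) -{1}(Kf (B u v)) defB.
  by rewrite [in B _ (finv (B u v))]QB B0 addr0.
have Tsym : forall x y, B (f (f (f x))) y = B x (f (f (f y))).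
  move=> x y; apply: (can_inj fK); rewrite -P3 Bs P3; by rewrite Bs.
have C3 : forall x y, finv (finv (finv (B x y))) = B (f (f (f x))) y.
  move=> x y; rewrite !QB.
  by rewrite (Tsym (f (f (f x)))) !Kf.
have e1 : forall x y, finv (B (f x) (f y)) = B (f (f (f x))) y.
  by move=> x y; rewrite P3 fK.
split.
- by split=> x /=; rewrite ?fK ?Kf.
- by [].
- move=> x y /=.
  rewrite defB Qadd defB.
  rewrite [finv (B (f (f x)) _)]QB Qadd Qadd defB -QB.
  rewrite (e1 x y) -C3; congr (_ + _).
  by rewrite (e1 (f x) (f y)) (e1 (f (f (f x))) y) (C3 x y) (C3 (f (f (f x))) y).
- by [].
- by move=> x y; rewrite C3.
Qed.
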